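(* Let $(X,T)$ be a minimal Cantor system with a sequence of CKR partitions satisfying (KR1)–(KR6), and let $\lambda=\exp(2i\pi\alpha)$ with $\alpha\in\mathbb R$. Then $\lambda$ is a continuous eigenvalue of $(X,T)$ if and only if $(\lambda^{r_n(x)})_{n\ge1}$ converges uniformly in $x\in X$ (equivalently, $(\alpha r_n(x))_{n\ge1}$ converges modulo $\mathbb Z$ uniformly in $x$).
   Context: CKR partitions $\mathcal P(n)=\{T^{-j}B_k(n):1\le k\le C(n),0\le j<h_k(n)\}$ (partitions of $X$, $B_k(n)$ clopen) with $\mathcal P(0)$ trivial, roof $B(n)=\bigcup_kB_k(n)$. (KR1) $B(n+1)\subseteq B(n)$; (KR2) $\mathcal P(n+1)$ refines $\mathcal P(n)$; (KR3) $\bigcap_nB(n)$ is a single point; (KR4) the partitions generate the topology; (KR5) for all $n\ge1$, $k\le C(n-1)$, $l\le C(n)$ some $0\le j<h_l(n)$ has $T^{-j}B_l(n)\subseteq B_k(n-1)$; (KR6) $B(n)\subseteq B_1(n-1)$ for $n\ge1$. $r_n(x)=\min\{j\ge0:T^jx\in B(n)\}$. A continuous eigenvalue is $\lambda$ with $f\circ T=\lambda f$ for some continuous nonzero $f:X\to\mathbb C$. *)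

(* Defs.v *)
From Stdlib Require Import Reals Lra Lia ZArith List ClassicalEpsilon.
Open Scope R_scope.

Set Implicit Arguments.

Section Topo.
Variable X : Type.
Variable opn : (X -> Prop) -> Prop.

Definition is_topology : Prop :=
  opn (fun _ => True) /\ opn (fun _ => False) /\
  (forall U V, opn U -> opn V -> opn (fun x => U x /\ V x)) /\
  (forall F : (X -> Prop) -> Prop, (forall U, F U -> opn U) ->
     opn (fun x => exists U, F U /\ U x)).

Definition closed (A : X -> Prop) : Prop := opn (fun x => ~ A x).
Definition clopen (A : X -> Prop) : Prop := opn A /\ closed A.

Definition compact_space : Prop :=
  forall F : (X -> Prop) -> Prop, (forall U, F U -> opn U) ->
    (forall x, exists U, F U /\ U x) ->
    exists l : list (X -> Prop), (forall U, In U l -> F U) /\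
      (forall x, exists U, In U l /\ U x).

Definition hausdorff : Prop :=
  forall x y, x <> y -> exists U V, opn U /\ opn V /\ U x /\ V y /\
    (forall z, U z -> V z -> False).

Definition second_countable : Prop :=
  exists b : nat -> (X -> Prop), (forall i, opn (b i)) /\
    (forall U x, opn U -> U x -> exists i, b i x /\ (forall y, b i y -> U y)).

Definition connected_subset (S : X -> Prop) : Prop :=
  forall U V, opn U -> opn V -> (forall x, S x -> U x \/ V x) ->
    (forall x, S x -> U x -> V x -> False) ->
    (forall x, S x -> U x) \/ (forall x, S x -> V x).

Definition totally_disconnected : Prop :=
  forall S, connected_subset S -> forall x y, S x -> S y -> x = y.

Definition no_isolated_point : Prop :=
  forall U x, opn U -> U x -> exists y, U y /\ y <> x.

(* A Cantor space: nonempty, compact, metrizable (for compact Hausdorff spaces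
   equivalent to second countable), totally disconnected, without isolated points. *)
Definition cantor_space : Prop :=
  is_topology /\ (exists x : X, True) /\ compact_space /\ hausdorff /\
  second_countable /\ totally_disconnected /\ no_isolated_point.

Definition continuous (f : X -> X) : Prop :=
  forall U, opn U -> opn (fun x => U (f x)).

Definition homeomorphism (T : X -> X) : Prop :=
  exists Tinv : X -> X, (forall x, Tinv (T x) = x) /\ (forall x, T (Tinv x) = x) /\
    continuous T /\ continuous Tinv.

Definition minimal (T : X -> X) : Prop :=
  forall Y : X -> Prop, closed Y -> (forall x, Y (T x) <-> Y x) ->
    (exists x, Y x) -> forall x, Y x.

Definition minimal_cantor_system (T : X -> X) : Prop :=
  cantor_space /\ homeomorphism T /\ minimal T.

End Topo.

Definition C := (R * R)%type.
Definition Cmult (z w : C) : C :=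
  (fst z * fst w - snd z * snd w, fst z * snd w + snd z * fst w).
Definition Cminus (z w : C) : C := (fst z - fst w, snd z - snd w).
Definition Cnorm (z : C) : R := sqrt (fst z * fst z + snd z * snd z).
Definition C0 : C := (0, 0).
Definition C1 : C := (1, 0).
Fixpoint Cpow (z : C) (n : nat) : C :=
  match n with O => C1 | S m => Cmult z (Cpow z m) end.
Definition expi2pi (alpha : R) : C := (cos (2 * PI * alpha), sin (2 * PI * alpha)).

Definition continuous_C (X : Type) (opn : (X -> Prop) -> Prop) (f : X -> C) : Prop :=
  forall x eps, 0 < eps -> exists U, opn U /\ U x /\
    forall y, U y -> Cnorm (Cminus (f y) (f x)) < eps.

Definition continuous_eigenvalue (X : Type) (opn : (X -> Prop) -> Prop)
    (T : X -> X) (lam : C) : Prop :=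
  exists f : X -> C, continuous_C opn f /\ (exists x, f x <> C0) /\
    forall x, f (T x) = Cmult lam (f x).

(* Data: C n = C(n), h n k = h_k(n), B n k = B_k(n), with 1 <= k <= C n.
   The atom T^{-j} B_k(n) is {x | T^j x \in B_k(n)}. *)
Definition atom (X : Type) (T : X -> X) (B : nat -> nat -> X -> Prop)
    (n k j : nat) : X -> Prop := fun x => B n k (Nat.iter j T x).

Definition roof (X : Type) (Cn : nat -> nat) (B : nat -> nat -> X -> Prop) (n : nat)
    : X -> Prop := fun x => exists k, (1 <= k <= Cn n)%nat /\ B n k x.

Definition is_KR_partition (X : Type) (opn : (X -> Prop) -> Prop) (T : X -> X)
    (Cn : nat -> nat) (h : nat -> nat -> nat) (B : nat -> nat -> X -> Prop) (n : nat) : Prop :=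
  (forall k, (1 <= k <= Cn n)%nat -> clopen opn (B n k) /\ (exists x, B n k x) /\
      (1 <= h n k)%nat) /\
  (forall x, exists k j, (1 <= k <= Cn n)%nat /\ (j < h n k)%nat /\ atom T B n k j x) /\
  (forall x k j k' j', (1 <= k <= Cn n)%nat -> (j < h n k)%nat ->
     (1 <= k' <= Cn n)%nat -> (j' < h n k')%nat ->
     atom T B n k j x -> atom T B n k' j' x -> k = k' /\ j = j').

Definition CKR_partitions (X : Type) (opn : (X -> Prop) -> Prop) (T : X -> X)
    (Cn : nat -> nat) (h : nat -> nat -> nat) (B : nat -> nat -> X -> Prop) : Prop :=
  (forall n, is_KR_partition opn T Cn h B n) /\
  (Cn 0%nat = 1%nat /\ h 0%nat 1%nat = 1%nat /\ forall x, B 0%nat 1%nat x) /\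
  (forall n x, roof Cn B (S n) x -> roof Cn B n x) /\
  (forall n k j, (1 <= k <= Cn (S n))%nat -> (j < h (S n) k)%nat ->
     exists k' j', (1 <= k' <= Cn n)%nat /\ (j' < h n k')%nat /\
       forall x, atom T B (S n) k j x -> atom T B n k' j' x) /\
  (exists x0, forall y, (forall n, roof Cn B n y) <-> y = x0) /\
  (forall U x, opn U -> U x -> exists n k j, (1 <= k <= Cn n)%nat /\ (j < h n k)%nat /\
     atom T B n k j x /\ forall y, atom T B n k j y -> U y) /\
  (forall n k l, (1 <= n)%nat -> (1 <= k <= Cn (n - 1))%nat -> (1 <= l <= Cn n)%nat ->
     exists j, (j < h n l)%nat /\ forall x, atom T B n l j x -> B (n - 1)%nat k x) /\
  (forall n x, (1 <= n)%nat -> roof Cn B n x -> B (n - 1)%nat 1%nat x).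

(* r_n(x) = min { j >= 0 : T^j x \in B(n) }  (well defined under minimality) *)
Definition first_entry (X : Type) (T : X -> X) (A : X -> Prop) (x : X) (j : nat) : Prop :=
  A (Nat.iter j T x) /\ forall i, (i < j)%nat -> ~ A (Nat.iter i T x).

Definition return_time (X : Type) (T : X -> X) (Cn : nat -> nat)
    (B : nat -> nat -> X -> Prop) (n : nat) (x : X) : nat :=
  epsilon (inhabits 0%nat) (first_entry T (roof Cn B n) x).

Definition unif_conv_C (X : Type) (u : nat -> X -> C) : Prop :=
  exists g : X -> C, forall eps, 0 < eps -> exists N, forall n x, (1 <= n)%nat -> (N <= n)%nat ->
    Cnorm (Cminus (u n x) (g x)) < eps.

Definition unif_conv_modZ (X : Type) (u : nat -> X -> R) : Prop :=
  exists g : X -> R, forall eps, 0 < eps -> exists N, forall n x, (1 <= n)%nat -> (N <= n)%nat ->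
    exists m : Z, Rabs (u n x - g x - IZR m) < eps.

(* Main.v *)
Require Import Defs.
From Stdlib Require Import Reals Lra Lia ZArith List Classical ClassicalEpsilon FunctionalExtensionality PropExtensionality Ratan.
Open Scope R_scope.

Lemma sqrt_tri x1 y1 x2 y2 :
  sqrt ((x1+x2)*(x1+x2) + (y1+y2)*(y1+y2)) <=
  sqrt (x1*x1+y1*y1) + sqrt (x2*x2+y2*y2).
Proof.
  set (A := x1*x1+y1*y1). set (B := x2*x2+y2*y2).
  assert (HA : 0 <= A) by (unfold A; nra).
  assert (HB : 0 <= B) by (unfold B; nra).
  pose proof (sqrt_pos A). pose proof (sqrt_pos B).
  pose proof (sqrt_sqrt A HA). pose proof (sqrt_sqrt B HB).
  set (q := x1*x2+y1*y2).
  assert (Hq : x1*x2+y1*y2 <= sqrt A * sqrt B).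
  { assert (E : (sqrt A * sqrt B) * (sqrt A * sqrt B) = A * B) by (replace ((sqrt A * sqrt B) * (sqrt A * sqrt B)) with ((sqrt A * sqrt A) * (sqrt B * sqrt B)) by ring; rewrite H1, H2; ring).
    assert (A*B - (x1*x2+y1*y2)*(x1*x2+y1*y2) = (x1*y2-x2*y1)*(x1*y2-x2*y1)) by (unfold A, B; ring).
    assert (Hp : 0 <= sqrt A * sqrt B) by (apply Rmult_le_pos; auto).
    set (p := sqrt A * sqrt B) in *. 
    destruct (Rle_dec q p) as [Hl|Hl]; auto.
    assert (p < q) by lra. assert (p*p < q*q) by (apply Rmult_le_0_lt_compat; lra).
    pose proof (Rle_0_sqr (x1*y2-x2*y1)). unfold Rsqr in *. unfold q in *. lra. }
  rewrite <- (sqrt_square (sqrt A + sqrt B)) by lra.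
  apply sqrt_le_1_alt.
  replace ((sqrt A + sqrt B) * (sqrt A + sqrt B)) with (sqrt A * sqrt A + sqrt B * sqrt B + 2 * (sqrt A * sqrt B)) by ring.
  rewrite H1, H2. fold q. unfold A, B in *.
  replace ((x1 + x2) * (x1 + x2) + (y1 + y2) * (y1 + y2)) with (x1 * x1 + y1 * y1 + (x2 * x2 + y2 * y2) + 2 * (x1*x2+y1*y2)) by ring.
  lra.
Qed.

Lemma sumsq_nn x y : 0 <= x*x+y*y.
Proof. pose proof (Rle_0_sqr x). pose proof (Rle_0_sqr y). unfold Rsqr in *. lra. Qed.

Lemma sumsq0 x y : x*x+y*y = 0 -> x = 0 /\ y = 0.
Proof.
  intros H. pose proof (Rle_0_sqr x). pose proof (Rle_0_sqr y). unfold Rsqr in *.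
  split; apply Rsqr_0_uniq; unfold Rsqr; lra.
Qed.

Definition Cconj (z : Defs.C) : Defs.C := (fst z, - snd z).

Lemma Cnorm_pos z : 0 <= Cnorm z.
Proof. apply sqrt_pos. Qed.

Lemma Cnorm_sq z : Cnorm z * Cnorm z = fst z * fst z + snd z * snd z.
Proof. unfold Cnorm. apply sqrt_sqrt. apply sumsq_nn. Qed.

Lemma Cnorm_tri a b c : Cnorm (Cminus a c) <= Cnorm (Cminus a b) + Cnorm (Cminus b c).
Proof.
  unfold Cnorm, Cminus; simpl.
  replace (fst a - fst c) with ((fst a - fst b) + (fst b - fst c)) by ring.
  replace (snd a - snd c) with ((snd a - snd b) + (snd b - snd c)) by ring.
  apply sqrt_tri.
Qed.

Lemma Cnorm_sym a b : Cnorm (Cminus a b) = Cnorm (Cminus b a).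
Proof. unfold Cnorm, Cminus; simpl. f_equal. ring. Qed.

Lemma Cnorm_rev a b : Cnorm a <= Cnorm (Cminus a b) + Cnorm b.
Proof.
  unfold Cnorm, Cminus; simpl.
  pose proof (sqrt_tri (fst a - fst b) (snd a - snd b) (fst b) (snd b)).
  replace (fst a - fst b + fst b) with (fst a) in H by ring.
  replace (snd a - snd b + snd b) with (snd a) in H by ring. exact H.
Qed.

Lemma Cnorm_mult z w : Cnorm (Cmult z w) = Cnorm z * Cnorm w.
Proof.
  unfold Cnorm, Cmult; simpl. rewrite <- sqrt_mult by apply sumsq_nn. f_equal. ring.
Qed.

Lemma Cnorm_conj_minus a b : Cnorm (Cminus (Cconj a) (Cconj b)) = Cnorm (Cminus a b).
Proof. unfold Cnorm, Cminus, Cconj; simpl. f_equal. ring. Qed.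

Lemma Cnorm_minus0 z : Cnorm (Cminus z C0) = Cnorm z.
Proof. unfold Cnorm, Cminus, C0; simpl. f_equal. ring. Qed.

Lemma Cnorm_zero_eq a b : (forall eps, 0 < eps -> Cnorm (Cminus a b) < eps) -> a = b.
Proof.
  intros H. destruct a as [a1 a2], b as [b1 b2].
  assert (E : Cnorm (Cminus (a1,a2) (b1,b2)) = 0).
  { pose proof (Cnorm_pos (Cminus (a1,a2) (b1,b2))).
    destruct (Rle_lt_or_eq_dec _ _ H0) as [Hl|He]; [|auto].
    specialize (H _ Hl). lra. }
  unfold Cnorm, Cminus in E; simpl in E.
  apply sqrt_eq_0 in E; [|apply sumsq_nn].
  apply sumsq0 in E. destruct E. assert (a1 = b1) by lra. assert (a2 = b2) by lra. subst; auto.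
Qed.

Lemma Cnorm_nz z : z <> C0 -> 0 < Cnorm z.
Proof.
  intros H. pose proof (Cnorm_pos z).
  destruct (Rle_lt_or_eq_dec _ _ H0) as [Hl|He]; auto.
  exfalso. apply H. destruct z as [a b]. unfold Cnorm in He; simpl in He.
  symmetry in He. apply sqrt_eq_0 in He; [|apply sumsq_nn].
  apply sumsq0 in He. destruct He. subst; reflexivity.
Qed.

Lemma Cnorm_expi a : Cnorm (expi2pi a) = 1.
Proof.
  unfold Cnorm, expi2pi; simpl. pose proof (sin2_cos2 (2*PI*a)). unfold Rsqr in H.
  rewrite <- sqrt_1. f_equal. lra.
Qed.

Lemma Cmult_assoc a b c : Cmult a (Cmult b c) = Cmult (Cmult a b) c.
Proof. unfold Cmult; simpl. f_equal; ring. Qed.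

Lemma Cmult_minus a b c : Cminus (Cmult a b) (Cmult a c) = Cmult a (Cminus b c).
Proof. unfold Cmult, Cminus; simpl. f_equal; ring. Qed.

Lemma Cpow_expi a m : Cpow (expi2pi a) m = expi2pi (a * INR m).
Proof.
  induction m as [|m IH].
  - simpl. unfold expi2pi, C1. rewrite Rmult_0_r, Rmult_0_r, cos_0, sin_0. reflexivity.
  - simpl Cpow. rewrite IH. rewrite S_INR. unfold expi2pi, Cmult; simpl.
    replace (2 * PI * (a * (INR m + 1))) with (2*PI*a + 2*PI*(a*INR m)) by ring.
    rewrite cos_plus, sin_plus. f_equal; ring.
Qed.

Lemma Cnorm_Cpow_expi a m : Cnorm (Cpow (expi2pi a) m) = 1.
Proof. rewrite Cpow_expi. apply Cnorm_expi. Qed.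

Lemma cos_Zperiod x m : cos (x + 2 * IZR m * PI) = cos x.
Proof.
  destruct (Z_le_gt_dec 0 m) as [Hm|Hm].
  - rewrite <- (Z2Nat.id m Hm). rewrite <- INR_IZR_INZ. apply cos_period.
  - assert (E : m = (- Z.of_nat (Z.to_nat (- m)))%Z) by lia.
    rewrite E, opp_IZR, <- INR_IZR_INZ.
    rewrite <- (cos_period (x + 2 * - INR (Z.to_nat (- m)) * PI) (Z.to_nat (-m))).
    f_equal. ring.
Qed.

Lemma sin_abs_le x : Rabs (sin x) <= Rabs x.
Proof.
  assert (Hgen : forall y, 0 < y -> Rabs (sin y) <= y).
  { intros y Hy. pose proof (sin_lt_x y Hy). pose proof PI2_1.
    destruct (Rle_dec 1 y).
    - pose proof (SIN_bound y). apply Rabs_le. lra.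
    - assert (0 <= sin y) by (apply sin_ge_0; lra). rewrite Rabs_right; lra. }
  destruct (Rtotal_order x 0) as [H|[H|H]].
  - rewrite <- (Ropp_involutive x), sin_neg, Rabs_Ropp, Rabs_Ropp.
    rewrite (Rabs_right (- x)) by lra. apply Hgen. lra.
  - subst. rewrite sin_0. lra.
  - rewrite (Rabs_right x) by lra. auto.
Qed.

Lemma edist a b m :
  Cnorm (Cminus (expi2pi a) (expi2pi b)) = 2 * Rabs (sin (PI * (a - b - IZR m))).
Proof.
  unfold Cnorm, Cminus, expi2pi; simpl.
  set (A := 2*PI*a). set (Bb := 2*PI*b).
  assert (E1 : (cos A - cos Bb) * (cos A - cos Bb) + (sin A - sin Bb) * (sin A - sin Bb)
              = 2 - 2 * cos (A - Bb)).
  { rewrite cos_minus. pose proof (sin2_cos2 A). pose proof (sin2_cos2 Bb). unfold Rsqr in *.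
    lra. }
  rewrite E1.
  assert (E2 : cos (A - Bb) = cos (2 * (PI * (a - b - IZR m)))).
  { rewrite <- (cos_Zperiod (2 * (PI * (a - b - IZR m))) m). f_equal. unfold A, Bb. ring. }
  rewrite E2, cos_2a_sin.
  replace (2 - 2 * (1 - 2 * sin (PI * (a - b - IZR m)) * sin (PI * (a - b - IZR m))))
    with (Rsqr (2 * sin (PI * (a - b - IZR m)))) by (unfold Rsqr; ring).
  rewrite sqrt_Rsqr_abs, Rabs_mult, (Rabs_right 2) by lra. reflexivity.
Qed.

Lemma modZ_to_C (X : Type) (v : nat -> X -> R) :
  unif_conv_modZ v -> unif_conv_C (fun n x => expi2pi (v n x)).
Proof.
  intros [g Hg]. exists (fun x => expi2pi (g x)). intros eps Heps.
  pose proof PI_RGT_0.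
  destruct (Hg (eps / (2 * PI))) as [N HN].
  { apply Rdiv_lt_0_compat; lra. }
  exists N. intros n x H1 H2. destruct (HN n x H1 H2) as [m Hm].
  rewrite (edist _ _ m).
  pose proof (sin_abs_le (PI * (v n x - g x - IZR m))) as S1.
  rewrite Rabs_mult, (Rabs_right PI) in S1 by lra.
  assert (S2 : PI * Rabs (v n x - g x - IZR m) < PI * (eps / (2 * PI))).
  { apply Rmult_lt_compat_l; lra. }
  replace (PI * (eps / (2 * PI))) with (eps / 2) in S2 by (field; lra).
  lra.
Qed.

Lemma near_int eps : 0 < eps -> exists kappa, 0 < kappa /\ forall a b,
  Cnorm (Cminus (expi2pi a) (expi2pi b)) < kappa -> exists m : Z, Rabs (a - b - IZR m) < eps.
Proof.
  intros Heps. pose proof PI_RGT_0. pose proof PI2_1.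
  set (e' := Rmin eps (1/2)).
  assert (He' : 0 < e' <= 1/2 /\ e' <= eps).
  { unfold e'. split; [split|]. apply Rmin_glb_lt; lra. apply Rmin_r. apply Rmin_l. }
  exists (2 * sin (PI * e')). split.
  { assert (0 < sin (PI * e')). { apply sin_gt_0. nra. nra. } lra. }
  intros a b Hab.
  exists (Int_part (a - b + 1/2)).
  destruct (base_Int_part (a - b + 1/2)) as [I1 I2].
  set (m := Int_part (a - b + 1/2)) in *.
  rewrite (edist _ _ m) in Hab.
  set (d := a - b - IZR m) in *.
  assert (Hd : -1/2 <= d < 1/2) by (unfold d; lra).
  destruct (Rlt_dec (Rabs d) e') as [Hl|Hl]; [lra|].
  exfalso.
  assert (Hmono : forall y, e' <= y <= 1/2 -> sin (PI * e') <= sin (PI * y)).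
  { intros y Hy. apply sin_incr_1; nra. }
  destruct (Rle_dec 0 d).
  - rewrite Rabs_right in Hl by lra.
    pose proof (Hmono d ltac:(lra)) as M1.
    pose proof (Rle_abs (sin (PI * d))) as M2. lra.
  - rewrite Rabs_left in Hl by lra.
    pose proof (Hmono (-d) ltac:(lra)) as M1.
    replace (PI * - d) with (- (PI * d)) in M1 by ring. rewrite sin_neg in M1.
    pose proof (Rle_abs (- sin (PI * d))) as M2. rewrite Rabs_Ropp in M2. lra.
Qed.

Lemma arg_exists w : Cnorm w = 1 -> exists t, expi2pi t = w.
Proof.
  intros Hw. pose proof (Cnorm_sq w). rewrite Hw in H.
  destruct w as [a b]; simpl in H.
  pose proof PI_RGT_0.
  assert (Ha : -1 <= a <= 1).
  { pose proof (Rle_0_sqr b). unfold Rsqr in *. split; nra. }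
  pose proof (cos_acos a Ha). pose proof (sin_acos a Ha).
  replace (1 - a²) with (Rsqr b) in H2 by (unfold Rsqr; lra).
  rewrite sqrt_Rsqr_abs in H2.
  destruct (Rle_dec 0 b).
  - exists (acos a / (2 * PI)). unfold expi2pi.
    replace (2 * PI * (acos a / (2 * PI))) with (acos a) by (field; lra).
    rewrite H1, H2, Rabs_right by lra. reflexivity.
  - exists (- acos a / (2 * PI)). unfold expi2pi.
    replace (2 * PI * (- acos a / (2 * PI))) with (- acos a) by (field; lra).
    rewrite cos_neg, sin_neg, H1, H2, Rabs_left by lra. f_equal. ring.
Qed.

Lemma C_to_modZ (X : Type) (v : nat -> X -> R) :
  unif_conv_C (fun n x => expi2pi (v n x)) -> unif_conv_modZ v.
Proof.
  intros [G HG].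
  assert (HG1 : forall x, Cnorm (G x) = 1).
  { intros x.
    assert (forall eps, 0 < eps -> Rabs (Cnorm (G x) - 1) < eps).
    { intros eps Heps. destruct (HG eps Heps) as [N HN].
      specialize (HN (Nat.max N 1) x ltac:(lia) ltac:(lia)).
      pose proof (Cnorm_rev (expi2pi (v (Nat.max N 1) x)) (G x)).
      pose proof (Cnorm_rev (G x) (expi2pi (v (Nat.max N 1) x))).
      rewrite Cnorm_expi in *. rewrite Cnorm_sym in H0. apply Rabs_def1; lra. }
    destruct (Req_dec (Cnorm (G x)) 1) as [E|E]; auto.
    exfalso. assert (0 < Rabs (Cnorm (G x) - 1)) by (apply Rabs_pos_lt; lra).
    specialize (H _ H0). lra. }
  exists (fun x => epsilon (inhabits 0) (fun t => expi2pi t = G x)).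
  intros eps Heps. destruct (near_int eps Heps) as [k [Hk Hk2]].
  destruct (HG k Hk) as [N HN]. exists N. intros n x H1 H2.
  apply Hk2.
  rewrite (epsilon_spec (inhabits 0) (fun t => expi2pi t = G x)).
  - apply HN; auto.
  - apply arg_exists. auto.
Qed.

Lemma C_iff_modZ (X : Type) (v : nat -> X -> R) :
  unif_conv_C (fun n x => expi2pi (v n x)) <-> unif_conv_modZ v.
Proof. split; [apply C_to_modZ | apply modZ_to_C]. Qed.

Lemma iter_succ_r (X : Type) (f : X -> X) j x : Nat.iter j f (f x) = f (Nat.iter j f x).
Proof. induction j; simpl; congruence. Qed.

Lemma iter_add (X : Type) (f : X -> X) a b x : Nat.iter (a + b) f x = Nat.iter a f (Nat.iter b f x).
Proof. induction a; simpl; congruence. Qed.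

Lemma first_entry_unique (X : Type) (T : X -> X) A x j1 j2 :
  first_entry T A x j1 -> first_entry T A x j2 -> j1 = j2.
Proof.
  intros [H1 H1'] [H2 H2'].
  destruct (lt_eq_lt_dec j1 j2) as [[L|E]|L]; auto.
  - exfalso. exact (H2' _ L H1).
  - exfalso. exact (H1' _ L H2).
Qed.

Lemma first_entry_exists (X : Type) (T : X -> X) (A : X -> Prop) x j :
  A (Nat.iter j T x) -> exists j', first_entry T A x j'.
Proof.
  revert x. induction j as [j IH] using lt_wf_ind. intros x Hj.
  destruct (classic (exists i, (i < j)%nat /\ A (Nat.iter i T x))) as [[i [Hi HA]]|Hn].
  - exact (IH i Hi x HA).
  - exists j. split; auto. intros i Hi HA. apply Hn. eauto.
Qed.

Lemma rt_first (X : Type) (opn : (X -> Prop) -> Prop) (T : X -> X) (Cn : nat -> nat) (h : nat -> nat -> nat) (B : nat -> nat -> X -> Prop) n x :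
  CKR_partitions opn T Cn h B ->
  first_entry T (roof Cn B n) x (return_time T Cn B n x).
Proof.
  intros HC. destruct HC as [HP _].
  destruct (HP n) as [_ [Hcov _]].
  destruct (Hcov x) as [k [j [Hk [Hj Ha]]]].
  unfold return_time. apply epsilon_spec.
  apply (first_entry_exists _ T (roof Cn B n) x j). exists k; auto.
Qed.

Lemma rt_atom (X : Type) (opn : (X -> Prop) -> Prop) (T : X -> X) (Cn : nat -> nat) (h : nat -> nat -> nat) (B : nat -> nat -> X -> Prop) n k j x :
  CKR_partitions opn T Cn h B ->
  (1 <= k <= Cn n)%nat -> (j < h n k)%nat -> atom T B n k j x ->
  return_time T Cn B n x = j.
Proof.
  intros HC Hk Hj Ha.
  apply (first_entry_unique _ T (roof Cn B n) x); [apply (rt_first _ opn T Cn h B); auto|].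
  destruct HC as [HP _].
  destruct (HP n) as [Hcl [_ Hdis]].
  split. { exists k; auto. }
  intros i Hi [k' [Hk' HB]].
  destruct (Hcl k' Hk') as [_ [_ Hh]].
  assert (E : Nat.iter j T x = Nat.iter (j - i) T (Nat.iter i T x)).
  { rewrite <- iter_add. f_equal. lia. }
  assert (A1 : atom T B n k (j - i) (Nat.iter i T x)) by (unfold atom in *; rewrite <- E; auto).
  assert (A2 : atom T B n k' 0 (Nat.iter i T x)) by (unfold atom; simpl; auto).
  destruct (Hdis (Nat.iter i T x) k (j - i)%nat k' 0%nat Hk ltac:(lia) Hk' ltac:(lia) A1 A2). lia.
Qed.

Lemma rt_shift (X : Type) (opn : (X -> Prop) -> Prop) (T : X -> X) (Cn : nat -> nat) (h : nat -> nat -> nat) (B : nat -> nat -> X -> Prop) n x :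
  CKR_partitions opn T Cn h B ->
  ~ roof Cn B n x -> return_time T Cn B n x = S (return_time T Cn B n (T x)).
Proof.
  intros HC Hn.
  apply (first_entry_unique _ T (roof Cn B n) x); [apply (rt_first _ opn T Cn h B); auto|].
  destruct (rt_first _ opn T Cn h B n (T x) HC) as [F1 F2].
  split.
  - simpl. rewrite <- iter_succ_r. auto.
  - intros i Hi. destruct i as [|i].
    + simpl. auto.
    + simpl. rewrite <- iter_succ_r. apply F2. lia.
Qed.

Lemma roof_decr (X : Type) (opn : (X -> Prop) -> Prop) (T : X -> X) (Cn : nat -> nat) (h : nat -> nat -> nat) (B : nat -> nat -> X -> Prop) m n x :
  CKR_partitions opn T Cn h B -> (m <= n)%nat -> roof Cn B n x -> roof Cn B m x.
Proof.
  intros HC Hmn. destruct HC as [_ [_ [K1 _]]].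
  induction Hmn; auto.
Qed.

Lemma opn_ext {X : Type} {opn : (X -> Prop) -> Prop} U V :
  (forall x, U x <-> V x) -> opn U -> opn V.
Proof.
  intros H HU. replace V with U; auto.
  apply functional_extensionality. intros x. apply propositional_extensionality. auto.
Qed.

Lemma roof_closed (X : Type) (opn : (X -> Prop) -> Prop) (T : X -> X) (Cn : nat -> nat) (h : nat -> nat -> nat) (B : nat -> nat -> X -> Prop) n :
  is_topology opn -> CKR_partitions opn T Cn h B -> opn (fun x => ~ roof Cn B n x).
Proof.
  intros Ht HC. destruct Ht as [Htop [_ [Hint _]]]. destruct HC as [HP _].
  destruct (HP n) as [Hcl _].
  assert (G : forall m, opn (fun x => forall k, (1 <= k <= m)%nat -> (k <= Cn n)%nat -> ~ B n k x)).
  { induction m.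
    - apply (opn_ext (fun _ => True)); auto. intros x; split; auto. intros; lia.
    - destruct (le_lt_dec (S m) (Cn n)) as [L|L].
      + destruct (Hcl (S m) ltac:(lia)) as [[_ Hc] _].
        apply (opn_ext (fun x => (forall k, (1 <= k <= m)%nat -> (k <= Cn n)%nat -> ~ B n k x) /\ ~ B n (S m) x)).
        2: apply Hint; auto.
        intros x; split.
        * intros [H1 H2] k Hk Hk2. destruct (Nat.eq_dec k (S m)); [subst; auto|]. apply H1; lia.
        * intros H; split; [intros; apply H; lia | apply H; lia].
      + apply (opn_ext (fun x => forall k, (1 <= k <= m)%nat -> (k <= Cn n)%nat -> ~ B n k x)); auto.
        intros x; split; intros H k Hk Hk2; apply H; lia. }
  refine (opn_ext _ _ _ (G (Cn n))).
  intros x; split.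
  - intros H [k [Hk HB]]. exact (H k Hk ltac:(lia) HB).
  - intros H k Hk _ HB. apply H. exists k; auto.
Qed.

Lemma iter_cont (X : Type) opn (T : X -> X) j :
  continuous opn T -> forall U, opn U -> opn (fun x => U (Nat.iter j T x)).
Proof.
  intros HT. induction j; intros U HU; simpl; auto.
  apply (IHj (fun y => U (T y))). apply HT; auto.
Qed.

Lemma shrink (X : Type) (opn : (X -> Prop) -> Prop) (T : X -> X) (Cn : nat -> nat) (h : nat -> nat -> nat) (B : nat -> nat -> X -> Prop) x0 (V : X -> Prop) :
  is_topology opn -> compact_space opn -> CKR_partitions opn T Cn h B ->
  (forall y, (forall n, roof Cn B n y) <-> y = x0) -> opn V -> V x0 ->
  exists N, forall n y, (N <= n)%nat -> roof Cn B n y -> V y.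
Proof.
  intros Ht Hc HC Hx0 HV Vx0.
  set (F := fun U : X -> Prop => U = V \/ exists n, U = (fun x => ~ roof Cn B n x)).
  destruct (Hc F) as [l [Hl1 Hl2]].
  - intros U [E|[n E]]; subst; auto. apply (roof_closed _ opn T Cn h B); auto.
  - intros x. destruct (classic (x = x0)) as [E|E].
    + subst. exists V. split; auto. left; auto.
    + assert (~ forall n, roof Cn B n x) by (intros H; apply E, Hx0; auto).
      apply not_all_ex_not in H. destruct H as [n Hn].
      exists (fun x => ~ roof Cn B n x). split; auto. right; eauto.
  - assert (Cl : forall l : list (X -> Prop), (forall U, In U l -> F U) ->
       exists N, forall U, In U l -> U = V \/ exists m, (m <= N)%nat /\ U = (fun x => ~ roof Cn B m x)).
    { induction l0 as [|U0 l0 IH]; intros HF.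
      - exists 0%nat. intros U [].
      - destruct IH as [N HN]. { intros U HU. apply HF. right; auto. }
        destruct (HF U0 (or_introl eq_refl)) as [E|[m E]].
        + exists N. intros U [<-|HU]; auto.
        + exists (Nat.max N m). intros U [<-|HU].
          * right. exists m. split; auto. lia.
          * destruct (HN U HU) as [E'|[m' [Hm' E']]]; auto. right. exists m'. split; auto. lia. }
    destruct (Cl l Hl1) as [N HN].
    exists N. intros n y Hn Hy. destruct (Hl2 y) as [U [HU Uy]].
    destruct (HN U HU) as [E|[m [Hm E]]]; subst; auto.
    exfalso. apply Uy. apply (roof_decr _ opn T Cn h B m n); auto. lia.
Qed.

Definition gfun (z z0 : Defs.C) : Defs.C :=
  ((fst z0 * fst z + snd z0 * snd z) / (fst z * fst z + snd z * snd z),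
   (snd z0 * fst z - fst z0 * snd z) / (fst z * fst z + snd z * snd z)).

Lemma gfun_id w z z0 : fst z * fst z + snd z * snd z <> 0 ->
  Cminus (Cmult w z) z0 = Cmult z (Cminus w (gfun z z0)).
Proof.
  intros H. destruct w as [w1 w2], z as [a b], z0 as [p q].
  unfold Cminus, Cmult, gfun; simpl in *. f_equal; field; auto.
Qed.

Lemma forward (X : Type) (opn : (X -> Prop) -> Prop) (T : X -> X) (Cn : nat -> nat) (h : nat -> nat -> nat) (B : nat -> nat -> X -> Prop) alpha :
  minimal_cantor_system opn T -> CKR_partitions opn T Cn h B ->
  continuous_eigenvalue opn T (expi2pi alpha) ->
  unif_conv_C (fun n x => Cpow (expi2pi alpha) (return_time T Cn B n x)).
Proof.
  intros [[Ht [_ [Hcomp _]]] [_ Hmin]] HC [f [Hcont [[x1 Hx1] Heig]]].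
  set (lam := expi2pi alpha) in *.
  assert (Hiter : forall j x, f (Nat.iter j T x) = Cmult (Cpow lam j) (f x)).
  { induction j; intros x; simpl.
    - destruct (f x) as [a b]. unfold Cmult, C1; simpl. f_equal; ring.
    - rewrite Heig, IHj. apply Cmult_assoc. }
  set (c := Cnorm (f x1)).
  assert (Hc : 0 < c) by (apply Cnorm_nz; auto).
  assert (Hconst : forall x, Cnorm (f x) = c).
  { apply (Hmin (fun x => Cnorm (f x) = c)).
    - unfold closed. destruct Ht as [_ [_ [_ Hun]]].
      refine (opn_ext (fun x => exists U, (opn U /\ forall y, U y -> Cnorm (f y) <> c) /\ U x) _ _ _).
      + intros x; split.
        * intros [U [[_ HU] Ux]]. apply HU; auto.
        * intros Hx. set (d := Rabs (Cnorm (f x) - c)).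
          assert (Hd : 0 < d) by (apply Rabs_pos_lt; lra).
          destruct (Hcont x d Hd) as [U [HU [Ux HUd]]].
          exists U. split; auto. split; auto. intros y Uy Hy.
          specialize (HUd y Uy).
          pose proof (Cnorm_rev (f x) (f y)). pose proof (Cnorm_rev (f y) (f x)).
          rewrite Cnorm_sym in H. unfold d in *.
          destruct (Rle_dec 0 (Cnorm (f x) - c)).
          { rewrite Rabs_right in HUd by lra. lra. }
          { rewrite Rabs_left in HUd by lra. lra. }
      + apply Hun. intros U [HU _]; auto.
    - intros x. rewrite Heig, Cnorm_mult. unfold lam. rewrite Cnorm_expi, Rmult_1_l. tauto.
    - exists x1. reflexivity. }
  pose proof HC as HC'. destruct HC' as [HP [H0 [K1 [K2 [[x0 Hx0] HCr]]]]].
  exists (fun x => gfun (f x) (f x0)).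
  intros eps Heps.
  destruct (Hcont x0 (eps * c) ltac:(nra)) as [U [HU [Ux0 HUe]]].
  destruct (shrink _ opn T Cn h B x0 U Ht Hcomp HC Hx0 HU Ux0) as [N HN].
  exists N. intros n x Hn1 Hn2.
  destruct (rt_first _ opn T Cn h B n x HC) as [Hr _].
  specialize (HUe _ (HN n _ Hn2 Hr)).
  rewrite Hiter in HUe.
  assert (Hnz : fst (f x) * fst (f x) + snd (f x) * snd (f x) <> 0).
  { rewrite <- Cnorm_sq, Hconst. nra. }
  rewrite (gfun_id _ _ _ Hnz), Cnorm_mult, Hconst in HUe.
  nra.
Qed.

Lemma conj_alg (lam w : Defs.C) : fst lam * fst lam + snd lam * snd lam = 1 ->
  Cconj w = Cmult lam (Cconj (Cmult lam w)).
Proof.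
  intros H. destruct lam as [c s], w as [p q]. unfold Cconj, Cmult; simpl in *.
  f_equal.
  - replace p with (p * (c*c+s*s)) at 1 by (rewrite H; ring). ring.
  - replace q with (q * (c*c+s*s)) at 1 by (rewrite H; ring). ring.
Qed.

Lemma backward (X : Type) (opn : (X -> Prop) -> Prop) (T : X -> X) (Cn : nat -> nat) (h : nat -> nat -> nat) (B : nat -> nat -> X -> Prop) alpha :
  minimal_cantor_system opn T -> CKR_partitions opn T Cn h B ->
  unif_conv_C (fun n x => Cpow (expi2pi alpha) (return_time T Cn B n x)) ->
  continuous_eigenvalue opn T (expi2pi alpha).
Proof.
  intros [[Ht [[xa _] [Hcomp [_ [_ [_ Hnip]]]]]] [[Tinv [_ [_ [HTc _]]]] Hmin]] HC [G HG].
  set (lam := expi2pi alpha) in *.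
  pose proof HC as HC'. destruct HC' as [HP [H0 [K1 [K2 [[x0 Hx0] HCr]]]]].
  assert (Hlam : Cnorm lam = 1) by apply Cnorm_expi.
  assert (Hcontg : continuous_C opn G).
  { intros x eps Heps.
    destruct (HG (eps/3) ltac:(lra)) as [N HN].
    set (n := Nat.max N 1).
    destruct (HP n) as [Hcl [Hcov _]].
    destruct (Hcov x) as [k [j [Hk [Hj Ha]]]].
    exists (atom T B n k j). split; [|split; auto].
    { apply (iter_cont _ opn T j HTc). apply Hcl; auto. }
    intros y Hy.
    pose proof (rt_atom _ opn T Cn h B n k j x HC Hk Hj Ha) as R1.
    pose proof (rt_atom _ opn T Cn h B n k j y HC Hk Hj Hy) as R2.
    pose proof (HN n x ltac:(lia) ltac:(lia)) as N1.
    pose proof (HN n y ltac:(lia) ltac:(lia)) as N2.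
    simpl in N1, N2. rewrite R1 in N1. rewrite R2 in N2.
    pose proof (Cnorm_tri (G y) (Cpow lam j) (G x)).
    rewrite Cnorm_sym in N2. lra. }
  set (f := fun x => Cconj (G x)).
  assert (Hcontf : continuous_C opn f).
  { intros x eps Heps. destruct (Hcontg x eps Heps) as [U [HU [Ux HUe]]].
    exists U. split; auto. split; auto. intros y Uy. unfold f. rewrite Cnorm_conj_minus. auto. }
  assert (Hlam2 : fst lam * fst lam + snd lam * snd lam = 1).
  { rewrite <- Cnorm_sq, Hlam. ring. }
  assert (Hgen : forall x, x <> x0 -> G x = Cmult lam (G (T x))).
  { intros x Hx. apply Cnorm_zero_eq. intros eps Heps.
    assert (~ forall n, roof Cn B n x) by (intros H; apply Hx, Hx0; auto).
    apply not_all_ex_not in H. destruct H as [n1 Hn1].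
    destruct (HG (eps/2) ltac:(lra)) as [N HN].
    set (n := Nat.max (Nat.max N 1) n1).
    assert (Hnr : ~ roof Cn B n x).
    { intros Hr. apply Hn1. apply (roof_decr _ opn T Cn h B n1 n); auto. lia. }
    pose proof (rt_shift _ opn T Cn h B n x HC Hnr) as Rs.
    pose proof (HN n x ltac:(lia) ltac:(lia)) as N1.
    pose proof (HN n (T x) ltac:(lia) ltac:(lia)) as N2.
    simpl in N1, N2. rewrite Rs in N1. simpl Cpow in N1.
    pose proof (Cnorm_tri (G x) (Cmult lam (Cpow lam (return_time T Cn B n (T x)))) (Cmult lam (G (T x)))) as Tr.
    rewrite Cmult_minus, Cnorm_mult, Hlam, Rmult_1_l in Tr.
    rewrite Cnorm_sym in N1. lra. }
  exists f. split; auto. split.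
  - exists xa. intros E.
    destruct (HG (1/2) ltac:(lra)) as [N HN].
    specialize (HN (Nat.max N 1) xa ltac:(lia) ltac:(lia)). simpl in HN.
    unfold f, Cconj, C0 in E.
    destruct (G xa) as [g1 g2]. simpl in E. injection E as E1 E2.
    assert (g2 = 0) by lra. subst.
    change (0, 0) with C0 in HN. rewrite Cnorm_minus0 in HN.
    unfold lam in HN. rewrite Cnorm_Cpow_expi in HN. lra.
  - assert (Hne : forall x, x <> x0 -> f (T x) = Cmult lam (f x)).
    { intros x Hx. unfold f. rewrite (Hgen x Hx). apply conj_alg; auto. }
    intros x. destruct (classic (x = x0)) as [E|E]; [|auto].
    subst x. apply Cnorm_zero_eq. intros eps Heps.
    destruct (Hcontf (T x0) (eps/2) ltac:(lra)) as [U1 [HU1 [U1x HU1e]]].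
    destruct (Hcontf x0 (eps/2) ltac:(lra)) as [U2 [HU2 [U2x HU2e]]].
    destruct Ht as [_ [_ [Hint _]]].
    assert (HW : opn (fun y => U1 (T y) /\ U2 y)) by (apply Hint; auto).
    destruct (Hnip _ x0 HW (conj U1x U2x)) as [y [[Wy1 Wy2] Hy]].
    specialize (HU1e _ Wy1). specialize (HU2e _ Wy2).
    pose proof (Cnorm_tri (f (T x0)) (f (T y)) (Cmult lam (f x0))) as Tr.
    rewrite (Hne y Hy), Cmult_minus, Cnorm_mult, Hlam, Rmult_1_l in Tr.
    rewrite (Hne y Hy) in HU1e. rewrite Cnorm_sym in HU1e. lra.
Qed.

Theorem mainTheorem8 (X : Type) (opn : (X -> Prop) -> Prop) (T : X -> X)
    (Cn : nat -> nat) (h : nat -> nat -> nat) (B : nat -> nat -> X -> Prop) (alpha : R) :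
  minimal_cantor_system opn T ->
  CKR_partitions opn T Cn h B ->
  (continuous_eigenvalue opn T (expi2pi alpha) <->
     unif_conv_C (fun n x => Cpow (expi2pi alpha) (return_time T Cn B n x))) /\
  (continuous_eigenvalue opn T (expi2pi alpha) <->
     unif_conv_modZ (fun n x => alpha * INR (return_time T Cn B n x))).
Proof.
  intros HM HC.
  assert (P1 : continuous_eigenvalue opn T (expi2pi alpha) <->
     unif_conv_C (fun n x => Cpow (expi2pi alpha) (return_time T Cn B n x))).
  { split; [apply (forward _ opn T Cn h B); auto | apply (backward _ opn T Cn h B); auto]. }
  split; auto.
  rewrite P1, <- C_iff_modZ.
  assert (E : (fun n x => Cpow (expi2pi alpha) (return_time T Cn B n x)) =
              (fun n x => expi2pi (alpha * INR (return_time T Cn B n x)))).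
  { apply functional_extensionality; intros n. apply functional_extensionality; intros x.
    apply Cpow_expi. }
  rewrite E. tauto.
Qed.
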